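(* Let $p, \sigma \in \mathbb{R}$ and let $u \geq 0$ be a non-trivial function in $C^2(0,+\infty)$ solving $-u''(r) = r^\sigma u(r)^p$ for all $r \in (0,+\infty)$ (no continuity at $0$ assumed). Then: (1) $u$ is non-decreasing and $u'$ is non-increasing on $(0,+\infty)$; (2) there exist constants $c>0$, $C>0$ and $r_1>0$ such that $c \leq u(r) \leq C r$ for all $r \geq r_1$.
   Context: For $p=0$ the term $u^p$ is understood as $1$; for $p<0$ it is required that $u>0$ on $(0,+\infty)$. *)

(* Defs.v *)
From Stdlib Require Import Reals Lra.
From Coquelicot Require Import Coquelicot.
Open Scope R_scope.

(* Real power x^y following the paper's conventions:
   y = 0 gives 1 (even for x = 0); for x > 0 it is exp (y ln x);
   for x = 0 and y <> 0 it is 0 (the value 0^y, y > 0; for y < 0 the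
   theorem assumes x > 0 anyway). *)
Definition rpow (x y : R) : R :=
  if Req_EM_T y 0 then 1
  else if Rlt_dec 0 x then Rpower x y else 0.

Definition C2_pos (u : R -> R) : Prop :=
  forall r, 0 < r ->
    ex_derive u r /\ ex_derive (Derive u) r /\
    continuous (Derive (Derive u)) r.

(* Main.v *)
Require Import Defs.
From Stdlib Require Import Reals Lra.
From Coquelicot Require Import Coquelicot.
Open Scope R_scope.

Lemma mvt_pos (f : R -> R) (a b : R) :
  (forall r, 0 < r -> ex_derive f r) -> 0 < a -> a <= b ->
  exists c, a <= c <= b /\ f b - f a = Derive f c * (b - a).
Proof.
  intros Hd Ha Hab.
  destruct (MVT_gen f a b (Derive f)) as [c [Hc He]].
  - intros x Hx. apply Derive_correct. apply Hd.
    rewrite Rmin_left in Hx by lra. lra.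
  - intros x Hx. apply continuity_pt_filterlim. apply (ex_derive_continuous (K:=R_AbsRing) (V:=R_NormedModule)).
    apply Hd. rewrite Rmin_left in Hx by lra. lra.
  - exists c. rewrite Rmin_left, Rmax_right in Hc by lra. split; auto.
Qed.

Lemma rpow_nonneg x y : 0 <= rpow x y.
Proof.
  unfold rpow. destruct (Req_EM_T y 0). lra.
  destruct (Rlt_dec 0 x). unfold Rpower. left; apply exp_pos. lra.
Qed.

Theorem lemma2p4 (p sigma : R) (u : R -> R) :
  C2_pos u ->
  (forall r, 0 < r -> 0 <= u r) ->
  (exists r, 0 < r /\ u r <> 0) ->
  (p < 0 -> forall r, 0 < r -> 0 < u r) ->
  (forall r, 0 < r ->
     - Derive (Derive u) r = Rpower r sigma * rpow (u r) p) ->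
  (forall r s, 0 < r -> r <= s ->
     u r <= u s /\ Derive u s <= Derive u r) /\
  (exists c C r1, 0 < c /\ 0 < C /\ 0 < r1 /\
     forall r, r1 <= r -> c <= u r /\ u r <= C * r).
Proof.
  intros HC Hu [r0 [Hr0 Hur0]] _ Heq.
  assert (Hd1 : forall r, 0 < r -> ex_derive u r) by (intros r Hr; apply HC, Hr).
  assert (Hd2 : forall r, 0 < r -> ex_derive (Derive u) r) by (intros r Hr; apply HC, Hr).
  assert (Hneg : forall r, 0 < r -> Derive (Derive u) r <= 0).
  { intros r Hr. pose proof (Heq r Hr).
    assert (0 <= Rpower r sigma * rpow (u r) p).
    { apply Rmult_le_pos. unfold Rpower. left; apply exp_pos. apply rpow_nonneg. }
    lra. }
  assert (Hdec : forall a b, 0 < a -> a <= b -> Derive u b <= Derive u a).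
  { intros a b Ha Hab. destruct (mvt_pos (Derive u) a b Hd2 Ha Hab) as [c [Hc He]].
    pose proof (Hneg c ltac:(lra)). nra. }
  assert (Hlin : forall a b, 0 < a -> a <= b -> u b <= u a + Derive u a * (b - a)).
  { intros a b Ha Hab. destruct (mvt_pos u a b Hd1 Ha Hab) as [c [Hc He]].
    pose proof (Hdec a c Ha ltac:(lra)). nra. }
  assert (Hpos : forall a, 0 < a -> 0 <= Derive u a).
  { intros a Ha. destruct (Rle_or_lt 0 (Derive u a)) as [H|H]; auto.
    exfalso. set (b := a + (u a + 1) / (- Derive u a)).
    assert (Hq : 0 <= (u a + 1) / (- Derive u a)).
    { apply Rle_mult_inv_pos. pose proof (Hu a Ha). lra. lra. }
    pose proof (Hlin a b Ha ltac:(unfold b; lra)).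
    assert (Derive u a * (b - a) = - (u a + 1)).
    { unfold b. field. lra. }
    pose proof (Hu b ltac:(unfold b; lra)). lra. }
  assert (Hinc : forall a b, 0 < a -> a <= b -> u a <= u b).
  { intros a b Ha Hab. destruct (mvt_pos u a b Hd1 Ha Hab) as [c [Hc He]].
    pose proof (Hpos c ltac:(lra)). nra. }
  split.
  - intros r s Hr Hrs. split; [apply Hinc|apply Hdec]; auto.
  - pose proof (Hu r0 Hr0). pose proof (Hpos r0 Hr0).
    exists (u r0), (u r0 + Derive u r0 + 1), (Rmax r0 1).
    split; [lra|]. split; [lra|]. split; [pose proof (Rmax_l r0 1); lra|].
    intros r Hr. pose proof (Rmax_l r0 1). pose proof (Rmax_r r0 1).
    split. apply Hinc; lra.
    pose proof (Hlin r0 r Hr0 ltac:(lra)). nra.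
Qed.
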